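(* For $n>1/2$ and $x\ge 0$ the following holds: \begin{equation*} \frac{2}{x+\sqrt{4n+2+x^2}}<\frac{U(n,x)}{U (n-1,x)}<\frac{2}{x+\sqrt{4n-2+x^2}} . \end{equation*} The lower bound also holds if $n\in (-1/2,1/2)$, and it turns into an equality if $n=-1/2$.
   Context: $U(a,x)$ denotes the standard parabolic cylinder function (as in the NIST Digital Library of Mathematical Functions, Chapter 12), i.e. the solution of $y''(x)-(x^2/4+a)y(x)=0$ that is recessive (decays) as $x\rightarrow+\infty$. The parameter $n$ is real. *)

(* Defs.v *)
From Stdlib Require Import Reals Lra.
From Coquelicot Require Import Coquelicot.
Open Scope R_scope.

(* [is_pcfU a y]: y is the standard parabolic cylinder function U(a,.)
   (DLMF 12.2): a solution on all of R of  y'' = (x^2/4 + a) y  which is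
   recessive at +oo, normalized as in DLMF 12.9.1:
     U(a,x) ~ x^(-a-1/2) e^(-x^2/4)  as x -> +oo.
   These conditions determine U(a,.) uniquely. *)
Definition is_pcfU (a : R) (y : R -> R) : Prop :=
  (exists y' : R -> R, forall x : R,
      is_derive y x (y' x) /\ is_derive y' x ((x ^ 2 / 4 + a) * y x)) /\
  is_lim (fun x => y x * Rpower x (a + 1 / 2) * exp (x ^ 2 / 4)) p_infty 1.

(* Main.v *)
Require Import Defs.
From Stdlib Require Import Reals Lra.
From Coquelicot Require Import Coquelicot.
Open Scope R_scope.

Lemma lim_eps (f : R -> R) (l : R) :
  is_lim f p_infty l -> forall eps, 0 < eps -> exists M, forall x, M < x -> Rabs (f x - l) < eps.
Proof.
  intros H eps Heps. apply is_lim_spec in H.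
  destruct (H (mkposreal eps Heps)) as [M HM]. exists M. intros x Hx. apply (HM x Hx).
Qed.

Lemma incr_lt (f df : R -> R) a b : a < b ->
  (forall c, a <= c <= b -> is_derive f c (df c)) -> (forall c, a < c < b -> 0 < df c) -> f a < f b.
Proof.
  intros Hab Hd Hp. destruct (MVT_cor2 f df a b Hab) as [c [Hc1 Hc2]].
  intros c Hc. apply is_derive_Reals. auto.
  assert (0 < df c * (b - a)) by (apply Rmult_lt_0_compat; [apply Hp; lra| lra]). lra.
Qed.

Lemma incr_le (f df : R -> R) a b : a <= b ->
  (forall c, a <= c <= b -> is_derive f c (df c)) -> (forall c, a < c < b -> 0 < df c) -> f a <= f b.
Proof.
  intros Hab Hd Hp. destruct (Req_dec a b) as [->|]. lra.
  left. apply (incr_lt f df); auto. lra.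
Qed.

Lemma mvt_lb (f df : R -> R) a b k : a < b ->
  (forall c, a <= c <= b -> is_derive f c (df c)) -> (forall c, a < c < b -> k <= df c) ->
  f a + k * (b - a) <= f b.
Proof.
  intros Hab Hd Hp. destruct (MVT_cor2 f df a b Hab) as [c [Hc1 Hc2]].
  intros c Hc. apply is_derive_Reals. auto.
  assert (k * (b - a) <= df c * (b - a)) by (apply Rmult_le_compat_r; [lra| apply Hp; lra]). lra.
Qed.

Lemma mvt_ub (f df : R -> R) a b k : a < b ->
  (forall c, a <= c <= b -> is_derive f c (df c)) -> (forall c, a < c < b -> df c <= k) ->
  f b <= f a + k * (b - a).
Proof.
  intros Hab Hd Hp. destruct (MVT_cor2 f df a b Hab) as [c [Hc1 Hc2]].
  intros c Hc. apply is_derive_Reals. auto.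
  assert (df c * (b - a) <= k * (b - a)) by (apply Rmult_le_compat_r; [lra| apply Hp; lra]). lra.
Qed.

Lemma exp_le a b : a <= b -> exp a <= exp b.
Proof. intros [h|h]. left; apply exp_increasing; auto. rewrite h; lra. Qed.

Lemma ln_lt_self x : 0 < x -> ln x < x.
Proof.
  intros Hx. assert (H := exp_ineq1_le x).
  destruct (Rlt_or_le (ln x) x) as [h|h]; auto.
  assert (exp x <= exp (ln x)) by (apply exp_le; auto).
  rewrite exp_ln in H0 by auto. lra.
Qed.

Lemma gauss_small (c eps : R) : 0 < eps -> exists M : R, forall x : R, M < x -> exp (c * x - x ^ 2 / 4) < eps.
Proof.
  intros He. exists (4 * Rabs c + 4 * Rabs (ln eps) + 4). intros x Hx.
  rewrite <- (exp_ln eps He). apply exp_increasing.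
  assert (Rabs c >= c) by (apply Rle_ge, RRle_abs).
  assert (Rabs (ln eps) >= - ln eps) by (rewrite <- Rabs_Ropp; apply Rle_ge, RRle_abs).
  assert (0 <= Rabs c) by apply Rabs_pos.
  assert (0 <= Rabs (ln eps)) by apply Rabs_pos.
  assert (c - x / 4 <= - Rabs (ln eps) - 1) by lra.
  assert (x * (c - x/4) <= x * (- Rabs (ln eps) - 1)) by (apply Rmult_le_compat_l; lra).
  assert (x * (- Rabs (ln eps) - 1) <= - Rabs (ln eps) - 1) by nra.
  assert (E: c * x - x^2/4 = x * (c - x/4)) by field. rewrite E. lra.
Qed.

Definition small_at_infty (U : R -> R) :=
  forall eps, 0 < eps -> exists M, forall x, M < x -> 0 < U x /\ U x < eps /\ x * U x < eps.

Lemma asym_small (U : R -> R) a :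
  is_lim (fun x => U x * Rpower x (a + 1 / 2) * exp (x ^ 2 / 4)) p_infty 1 ->
  small_at_infty U.
Proof.
  intros H eps He.
  destruct (lim_eps _ _ H (1/2)) as [M1 HM1]; [lra|].
  destruct (gauss_small (1 + Rabs (a + 1/2)) (eps / 2)) as [M2 HM2]; [lra|].
  exists (Rmax 1 (Rmax M1 M2)). intros x Hx.
  assert (Hx1 : 1 < x) by (eapply Rle_lt_trans; [apply Rmax_l| exact Hx]).
  assert (HxM1 : M1 < x) by (eapply Rle_lt_trans; [|exact Hx]; eapply Rle_trans; [apply Rmax_l|apply Rmax_r]).
  assert (HxM2 : M2 < x) by (eapply Rle_lt_trans; [|exact Hx]; eapply Rle_trans; [apply Rmax_r|apply Rmax_r]).
  specialize (HM1 x HxM1). specialize (HM2 x HxM2).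
  set (P := U x * Rpower x (a + 1 / 2) * exp (x ^ 2 / 4)) in *.
  apply Rabs_lt_between' in HM1.
  unfold Rpower in P.
  set (m := a + 1/2) in *.
  assert (HU : U x = P * exp (- (m * ln x) - x^2/4)).
  { unfold P, Rpower.
    replace (-(m * ln x) - x^2/4) with (-(m * ln x + x^2/4)) by field.
    rewrite exp_Ropp, exp_plus. field. split; apply Rgt_not_eq, exp_pos. }
  assert (Hln : 0 < ln x < x) by (split; [rewrite <- ln_1; apply ln_increasing; lra| apply ln_lt_self; lra]).
  assert (Hb : - (m * ln x) <= Rabs m * x).
  { assert (- m <= Rabs m) by (rewrite <- Rabs_Ropp; apply RRle_abs).
    assert (0 <= Rabs m) by apply Rabs_pos.
    assert (0 <= (Rabs m + m) * ln x) by (apply Rmult_le_pos; lra).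
    assert (0 <= Rabs m * (x - ln x)) by (apply Rmult_le_pos; lra). nra. }
  assert (HxU : x * U x <= 2 * exp ((1 + Rabs m) * x - x ^ 2 / 4)).
  { rewrite HU. replace ((1 + Rabs m) * x - x ^ 2 / 4) with (x + (Rabs m * x - x^2/4)) by field.
    rewrite exp_plus.
    assert (exp (- (m * ln x) - x ^ 2 / 4) <= exp (Rabs m * x - x ^ 2 / 4)).
    { apply exp_le. lra. }
    assert (x < exp x) by (assert (H1 := exp_ineq1_le x); lra).
    assert (0 < exp (- (m * ln x) - x ^ 2 / 4)) by apply exp_pos.
    assert (0 < exp (Rabs m * x - x ^ 2 / 4)) by apply exp_pos.
    set (E1 := exp (- (m * ln x) - x ^ 2 / 4)) in *. set (E2 := exp (Rabs m * x - x ^ 2 / 4)) in *.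
    assert (x * (P * E1) <= x * (2 * E2)) by (apply Rmult_le_compat_l; nra).
    assert (x * (2 * E2) <= 2 * (exp x * E2)) by nra. lra. }
  assert (0 < U x) by (rewrite HU; apply Rmult_lt_0_compat; [lra| apply exp_pos]).
  split; [auto|]. split; nra.
Qed.

Lemma decr_lt (f df : R -> R) a b : a < b ->
  (forall c, a <= c <= b -> is_derive f c (df c)) -> (forall c, a < c < b -> df c < 0) -> f b < f a.
Proof.
  intros Hab Hd Hp. destruct (MVT_cor2 f df a b Hab) as [c [Hc1 Hc2]].
  intros c Hc. apply is_derive_Reals. auto.
  assert (df c * (b - a) < 0).
  { assert (0 < - df c * (b - a)) by (apply Rmult_lt_0_compat; [assert (df c < 0) by (apply Hp; lra); lra| lra]). lra. }
  lra.
Qed.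

Lemma decr_le (f df : R -> R) a b : a <= b ->
  (forall c, a <= c <= b -> is_derive f c (df c)) -> (forall c, a < c < b -> df c < 0) -> f b <= f a.
Proof.
  intros Hab Hd Hp. destruct (Req_dec a b) as [->|]. lra.
  left. apply (decr_lt f df); auto. lra.
Qed.

Ltac rwd f v x := replace (Derive (fun y : R => f y) x) with v by (symmetry; apply is_derive_unique; auto).

Lemma riccA (U dU q T dT G : R -> R) (x0 : R) :
  (forall x, is_derive U x (dU x)) -> (forall x, is_derive dU x (q x * U x)) ->
  (forall x, is_derive T x (dT x)) -> (forall x, is_derive G x (T x)) ->
  (forall x, x0 <= x -> 0 < U x) -> (forall x, x0 <= x -> 0 <= T x) ->
  (forall x, x0 <= x -> T x ^ 2 - q x - dT x < 0) ->
  (forall eps, 0 < eps -> exists M, forall x, M < x -> U x < eps /\ T x * U x < eps) ->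
  0 < - dU x0 - T x0 * U x0.
Proof.
  intros HU HdU HT HG Hpos HTpos Hsign Hsmall.
  set (phi := fun x => - dU x - T x * U x).
  set (P := fun x => phi x * exp (- G x)).
  set (dP := fun x => U x * (T x ^ 2 - q x - dT x) * exp (- G x)).
  assert (HP : forall x, is_derive P x (dP x)).
  { intro x. unfold P, phi, dP. auto_derive.
    - repeat split; eexists; eauto.
    - rwd U (dU x) x. rwd dU (q x * U x) x. rwd T (dT x) x. rwd G (T x) x. ring. }
  destruct (Rlt_or_le 0 (phi x0)) as [h|h]; [exact h|exfalso].
  assert (H1 : P (x0 + 1) < P x0).
  { apply (decr_lt P dP); [lra| intros; apply HP|].
    intros c Hc. unfold dP. 
    assert (0 < U c) by (apply Hpos; lra). assert (T c ^ 2 - q c - dT c < 0) by (apply Hsign; lra).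
    assert (0 < exp (- G c)) by apply exp_pos.
    assert (0 < U c * exp (- G c)) by (apply Rmult_lt_0_compat; lra). nra. }
  assert (HP0 : P x0 <= 0).
  { unfold P. assert (0 < exp (- G x0)) by apply exp_pos. fold (phi x0). nra. }
  set (c := - P (x0 + 1)).
  assert (Hc : 0 < c) by (unfold c; lra).
  set (K := exp (G x0)).
  assert (HK : 0 < K) by apply exp_pos.
  assert (Hphi : forall y, x0 + 1 <= y -> phi y <= - c * K).
  { intros y Hy.
    assert (HPy : P y <= P (x0 + 1)).
    { apply (decr_le P dP); [lra| intros; apply HP|].
      intros z Hz. unfold dP.
      assert (0 < U z) by (apply Hpos; lra). assert (T z ^ 2 - q z - dT z < 0) by (apply Hsign; lra).
      assert (0 < exp (- G z)) by apply exp_pos.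
      assert (0 < U z * exp (- G z)) by (apply Rmult_lt_0_compat; lra). nra. }
    assert (HGy : G x0 + 0 * (y - x0) <= G y).
    { apply (mvt_lb G T); [lra| intros; apply HG| intros z Hz; apply HTpos; lra]. }
    assert (HKy : K <= exp (G y)) by (apply exp_le; lra).
    assert (phi y = P y * exp (G y)).
    { unfold P. rewrite exp_Ropp. field. apply Rgt_not_eq, exp_pos. }
    assert (0 < exp (G y)) by apply exp_pos.
    assert (P y <= - c) by (unfold c; lra).
    nra. }
  destruct (Hsmall (Rmin 1 (c * K / 2))) as [M HM].
  { apply Rmin_pos; [lra| apply Rdiv_lt_0_compat; [apply Rmult_lt_0_compat|]; lra]. }
  set (a := Rmax M (x0 + 1) + 1).
  assert (Ha1 : M < a) by (unfold a; assert (H := Rmax_l M (x0+1)); lra).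
  assert (Ha2 : x0 + 1 < a) by (unfold a; assert (H := Rmax_r M (x0+1)); lra).
  set (b := a + 2 / (c * K)).
  assert (HcK : 0 < c * K) by (apply Rmult_lt_0_compat; lra).
  assert (Hab : a < b) by (unfold b; assert (0 < 2 / (c * K)) by (apply Rdiv_lt_0_compat; lra); lra).
  assert (Hmvt : U a + (c * K / 2) * (b - a) <= U b).
  { apply (mvt_lb U dU); [lra| intros; apply HU|].
    intros z Hz. destruct (HM z) as [_ HM2]; [lra|].
    assert (Rmin 1 (c * K / 2) <= c * K / 2) by apply Rmin_r.
    assert (phi z <= - c * K) by (apply Hphi; lra). unfold phi in *. lra. }
  assert (E : (c * K / 2) * (b - a) = 1) by (unfold b; field; lra).
  rewrite E in Hmvt.
  destruct (HM b) as [HM1 _]; [lra|].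
  assert (Rmin 1 (c * K / 2) <= 1) by apply Rmin_l.
  assert (0 < U a) by (apply Hpos; lra). lra.
Qed.

Lemma riccB (U dU q T dT G : R -> R) (x0 : R) :
  (forall x, is_derive U x (dU x)) -> (forall x, is_derive dU x (q x * U x)) ->
  (forall x, is_derive T x (dT x)) -> (forall x, is_derive G x (T x)) ->
  (forall x, x0 <= x -> 0 < U x) -> (forall x, x0 <= x -> 0 <= T x) ->
  (forall x, x0 <= x -> 0 < T x ^ 2 - q x - dT x) ->
  - dU x0 - T x0 * U x0 < 0.
Proof.
  intros HU HdU HT HG Hpos HTpos Hsign.
  set (phi := fun x => - dU x - T x * U x).
  set (P := fun x => phi x * exp (- G x)).
  set (dP := fun x => U x * (T x ^ 2 - q x - dT x) * exp (- G x)).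
  assert (HP : forall x, is_derive P x (dP x)).
  { intro x. unfold P, phi, dP. auto_derive.
    - repeat split; eexists; eauto.
    - rwd U (dU x) x. rwd dU (q x * U x) x. rwd T (dT x) x. rwd G (T x) x. ring. }
  destruct (Rlt_or_le (phi x0) 0) as [h|h]; [exact h|exfalso].
  assert (H1 : P x0 < P (x0 + 1)).
  { apply (incr_lt P dP); [lra| intros; apply HP|].
    intros c Hc. unfold dP. 
    assert (0 < U c) by (apply Hpos; lra). assert (0 < T c ^ 2 - q c - dT c) by (apply Hsign; lra).
    assert (0 < exp (- G c)) by apply exp_pos.
    assert (0 < U c * exp (- G c)) by (apply Rmult_lt_0_compat; lra). nra. }
  assert (HP0 : 0 <= P x0).
  { unfold P. assert (0 < exp (- G x0)) by apply exp_pos. fold (phi x0). nra. }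
  set (c := P (x0 + 1)).
  assert (Hc : 0 < c) by (unfold c; lra).
  set (K := exp (G x0)).
  assert (HK : 0 < K) by apply exp_pos.
  assert (Hphi : forall y, x0 + 1 <= y -> c * K <= phi y).
  { intros y Hy.
    assert (HPy : P (x0 + 1) <= P y).
    { apply (incr_le P dP); [lra| intros; apply HP|].
      intros z Hz. unfold dP.
      assert (0 < U z) by (apply Hpos; lra). assert (0 < T z ^ 2 - q z - dT z) by (apply Hsign; lra).
      assert (0 < exp (- G z)) by apply exp_pos.
      assert (0 < U z * exp (- G z)) by (apply Rmult_lt_0_compat; lra). nra. }
    assert (HGy : G x0 + 0 * (y - x0) <= G y).
    { apply (mvt_lb G T); [lra| intros; apply HG| intros z Hz; apply HTpos; lra]. }
    assert (HKy : K <= exp (G y)) by (apply exp_le; lra).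
    assert (phi y = P y * exp (G y)).
    { unfold P. rewrite exp_Ropp. field. apply Rgt_not_eq, exp_pos. }
    assert (0 < exp (G y)) by apply exp_pos.
    assert (c <= P y) by (unfold c; lra).
    nra. }
  set (a := x0 + 1).
  assert (HcK : 0 < c * K) by (apply Rmult_lt_0_compat; lra).
  set (b := a + U a / (c * K) + 1).
  assert (HUa : 0 < U a) by (apply Hpos; unfold a; lra).
  assert (Hab : a < b) by (unfold b; assert (0 < U a / (c * K)) by (apply Rdiv_lt_0_compat; lra); lra).
  assert (Hmvt : U b <= U a + (- (c * K)) * (b - a)).
  { apply (mvt_ub U dU); [lra| intros; apply HU|].
    intros z Hz.
    assert (c * K <= phi z) by (apply Hphi; unfold a in *; lra).
    assert (0 < U z) by (apply Hpos; unfold a in *; lra).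
    assert (0 <= T z) by (apply HTpos; unfold a in *; lra).
    assert (0 <= T z * U z) by (apply Rmult_le_pos; lra).
    unfold phi in *. lra. }
  assert (E : (- (c * K)) * (b - a) = - U a - c * K) by (unfold b; field; lra).
  rewrite E in Hmvt.
  assert (0 < U b) by (apply Hpos; unfold a in *; lra). lra.
Qed.

Lemma cont_eps (f : R -> R) z l : is_derive f z l ->
  forall eps, 0 < eps -> exists d, 0 < d /\ forall w, Rabs (w - z) < d -> Rabs (f w - f z) < eps.
Proof.
  intros Hd eps He.
  assert (Hc : continuity_pt f z).
  { apply continuity_pt_filterlim. apply (ex_derive_continuous f z). exists l. exact Hd. }
  destruct (Hc eps He) as [d [Hd0 H]]. exists d. split; auto.
  intros w Hw. destruct (Req_dec z w) as [<-|hne].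
  - unfold Rminus. rewrite Rplus_opp_r, Rabs_R0. exact He.
  - apply (H w). split; [split; [exact I| exact hne]| exact Hw].
Qed.

Definition qf (a : R) := fun x : R => x ^ 2 / 4 + a.

Lemma riccA_half (U dU : R -> R) n x0 :
  (forall x, is_derive U x (dU x)) -> (forall x, is_derive dU x (qf n x * U x)) ->
  -1/2 < n -> small_at_infty U -> 0 <= x0 -> (forall x, x0 <= x -> 0 < U x) ->
  0 < - dU x0 - x0 / 2 * U x0.
Proof.
  intros HU HdU Hn Hs Hx0 Hpos.
  apply (riccA U dU (qf n) (fun x => x / 2) (fun _ => 1/2) (fun x => x ^ 2 / 4) x0); auto.
  - intro x. auto_derive; [exact I| field].
  - intro x. auto_derive; [exact I| field].
  - intros x Hx. lra.
  - intros x Hx. unfold qf. field_simplify. lra.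
  - intros eps He. destruct (Hs eps He) as [M HM]. exists (Rmax M 0). intros x Hx.
    assert (M < x) by (eapply Rle_lt_trans; [apply Rmax_l| exact Hx]).
    assert (0 < x) by (eapply Rle_lt_trans; [apply Rmax_r| exact Hx]).
    destruct (HM x) as [h1 [h2 h3]]; auto. split; auto. nra.
Qed.

Lemma U_pos (U dU : R -> R) n :
  (forall x, is_derive U x (dU x)) -> (forall x, is_derive dU x (qf n x * U x)) ->
  -1/2 < n -> small_at_infty U -> forall x, 0 <= x -> 0 < U x.
Proof.
  intros HU HdU Hn Hs x1 Hx1.
  destruct (Rlt_or_le 0 (U x1)) as [h|h]; [exact h| exfalso].
  destruct (Hs 1) as [M HM]; [lra|].
  set (B := Rmax M x1).
  set (E := fun w => x1 <= w <= B + 1 /\ U w <= 0).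
  assert (HEb : forall w, E w -> w <= B).
  { intros w [Hw1 Hw2]. destruct (Rle_or_lt w M) as [h'|h'].
    - eapply Rle_trans; [exact h'| apply Rmax_l].
    - destruct (HM w h') as [h3 _]. lra. }
  destruct (completeness E) as [z [Hz1 Hz2]].
  { exists B. intros w Hw. apply HEb; auto. }
  { exists x1. unfold E. assert (x1 <= B) by apply Rmax_r. repeat split; lra. }
  assert (Hzx1 : x1 <= z) by (apply Hz1; unfold E; assert (x1 <= B) by apply Rmax_r; repeat split; lra).
  assert (HzB : z <= B) by (apply Hz2; intros w Hw; apply HEb; auto).
  assert (HUz : U z <= 0).
  { destruct (Rle_or_lt (U z) 0) as [h'|h']; auto. exfalso.
    destruct (cont_eps U z (dU z) (HU z) (U z) h') as [d [Hd Hd2]].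
    assert (z <= z - d/2).
    { apply Hz2. intros w Hw. destruct (Rle_or_lt w (z - d/2)) as [h2|h2]; auto.
      assert (w <= z) by (apply Hz1; auto).
      assert (Rabs (w - z) < d) by (apply Rabs_def1; lra).
      specialize (Hd2 w H0). apply Rabs_def2 in Hd2. destruct Hw. lra. }
    lra. }
  assert (Hafter : forall w, z < w -> 0 < U w).
  { intros w Hw. destruct (Rlt_or_le 0 (U w)) as [h'|h']; auto. exfalso.
    destruct (Rle_or_lt w (B + 1)) as [h2|h2].
    - assert (w <= z) by (apply Hz1; unfold E; repeat split; lra). lra.
    - assert (M < w) by (assert (M <= B) by apply Rmax_l; lra).
      destruct (HM w H) as [h3 _]. lra. }
  assert (U (z + 1) < U z).
  { apply (decr_lt U dU); [lra| intros; apply HU|].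
    intros c Hc.
    assert (0 < - dU c - c / 2 * U c).
    { apply (riccA_half U dU n c); auto; try lra. intros y Hy; apply Hafter; lra. }
    assert (0 < U c) by (apply Hafter; lra).
    assert (0 <= c / 2 * U c) by (apply Rmult_le_pos; lra). lra. }
  assert (0 < U (z + 1)) by (apply Hafter; lra). lra.
Qed.

Lemma const_zero (f df : R -> R) a b : a <= b ->
  (forall c, a <= c <= b -> is_derive f c (df c)) -> (forall c, a < c < b -> df c = 0) -> f b = f a.
Proof.
  intros Hab Hd H0. destruct (Req_dec a b) as [->|hne]; auto.
  assert (f a + 0 * (b - a) <= f b) by (apply (mvt_lb f df); auto; [lra| intros; rewrite H0; lra]).
  assert (f b <= f a + 0 * (b - a)) by (apply (mvt_ub f df); auto; [lra| intros; rewrite H0; lra]).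
  lra.
Qed.

Lemma uniq_sol (Y dY Z dZ q : R -> R) x0 :
  (forall x, is_derive Y x (dY x)) -> (forall x, is_derive dY x (q x * Y x)) ->
  (forall x, is_derive Z x (dZ x)) -> (forall x, is_derive dZ x (q x * Z x)) ->
  (forall x, x0 <= x -> 0 < Y x) ->
  (forall eps, 0 < eps -> exists M, forall x, M < x -> Y x < eps) ->
  (forall eps, 0 < eps -> exists M, forall x, M < x -> Rabs (Z x / Y x - 1) < eps) ->
  forall x, x0 <= x -> Z x = Y x.
Proof.
  intros HY HdY HZ HdZ Hpos HY0 Hlim.
  set (w := fun x => Y x * dZ x - Z x * dY x).
  assert (Hw : forall x, is_derive w x 0).
  { intro x. unfold w. auto_derive.
    - repeat split; eexists; eauto.
    - rwd Y (dY x) x. rwd Z (dZ x) x. rwd dY (q x * Y x) x. rwd dZ (q x * Z x) x. ring. }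
  set (c := w x0).
  assert (Hwc : forall x, x0 <= x -> w x = c).
  { intros x Hx. apply (const_zero w (fun _ => 0)); auto. }
  set (g := fun x => Z x / Y x).
  assert (Hg : forall x, x0 <= x -> is_derive g x (c / (Y x) ^ 2)).
  { intros x Hx. assert (0 < Y x) by auto. unfold g. auto_derive.
    - repeat split; try (eexists; eauto). lra.
    - rwd Y (dY x) x. rwd Z (dZ x) x. rewrite <- (Hwc x Hx). unfold w. field. lra. }
  destruct (Hlim (1/2)) as [M2 HM2]; [lra|].
  assert (Hc : c = 0).
  { destruct (Rtotal_order c 0) as [h|[h|h]]; auto; exfalso.
    - destruct (HY0 (Rmin 1 (- c))) as [M1 HM1]; [apply Rmin_pos; lra|].
      set (a := Rmax x0 (Rmax M1 M2) + 1).
      assert (x0 < a /\ M1 < a /\ M2 < a) as [Ha1 [Ha2 Ha3]].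
      { unfold a. assert (H1 := Rmax_l x0 (Rmax M1 M2)). assert (H2 := Rmax_r x0 (Rmax M1 M2)).
        assert (H3 := Rmax_l M1 M2). assert (H4 := Rmax_r M1 M2). lra. }
      assert (g (a + 2) <= g a + (-1) * (a + 2 - a)).
      { apply (mvt_ub g (fun x => c / (Y x) ^ 2)); [lra| intros; apply Hg; lra|].
        intros z Hz. assert (0 < Y z) by (apply Hpos; lra).
        assert (Y z < Rmin 1 (- c)) by (apply HM1; lra).
        assert (Rmin 1 (-c) <= 1) by apply Rmin_l. assert (Rmin 1 (-c) <= - c) by apply Rmin_r.
        assert (Y z ^ 2 < - c) by nra.
        apply (Rmult_le_reg_r (Y z ^ 2)); [nra|]. unfold Rdiv. rewrite Rmult_assoc, Rinv_l by nra. lra. }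
      assert (Rabs (g a - 1) < 1/2) by (apply HM2; lra).
      assert (Rabs (g (a+2) - 1) < 1/2) by (apply HM2; lra).
      apply Rabs_def2 in H0. apply Rabs_def2 in H1. lra.
    - destruct (HY0 (Rmin 1 c)) as [M1 HM1]; [apply Rmin_pos; lra|].
      set (a := Rmax x0 (Rmax M1 M2) + 1).
      assert (x0 < a /\ M1 < a /\ M2 < a) as [Ha1 [Ha2 Ha3]].
      { unfold a. assert (H1 := Rmax_l x0 (Rmax M1 M2)). assert (H2 := Rmax_r x0 (Rmax M1 M2)).
        assert (H3 := Rmax_l M1 M2). assert (H4 := Rmax_r M1 M2). lra. }
      assert (g a + 1 * (a + 2 - a) <= g (a + 2)).
      { apply (mvt_lb g (fun x => c / (Y x) ^ 2)); [lra| intros; apply Hg; lra|].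
        intros z Hz. assert (0 < Y z) by (apply Hpos; lra).
        assert (Y z < Rmin 1 c) by (apply HM1; lra).
        assert (Rmin 1 c <= 1) by apply Rmin_l. assert (Rmin 1 c <= c) by apply Rmin_r.
        assert (Y z ^ 2 < c) by nra.
        apply (Rmult_le_reg_r (Y z ^ 2)); [nra|]. unfold Rdiv. rewrite Rmult_assoc, Rinv_l by nra. lra. }
      assert (Rabs (g a - 1) < 1/2) by (apply HM2; lra).
      assert (Rabs (g (a+2) - 1) < 1/2) by (apply HM2; lra).
      apply Rabs_def2 in H0. apply Rabs_def2 in H1. lra. }
  intros x Hx.
  assert (Hgx : g x = 1).
  { destruct (Req_dec (g x) 1) as [h|h]; auto. exfalso.
    assert (He : 0 < Rabs (g x - 1)) by (apply Rabs_pos_lt; lra).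
    destruct (Hlim _ He) as [M HM].
    set (y := Rmax x M + 1).
    assert (x < y /\ M < y) as [Hy1 Hy2] by (unfold y; assert (H1 := Rmax_l x M); assert (H2 := Rmax_r x M); lra).
    assert (g y = g x).
    { apply (const_zero g (fun x => c / (Y x) ^ 2)); [lra| intros; apply Hg; lra|].
      intros; rewrite Hc; unfold Rdiv; ring. }
    specialize (HM y Hy2). fold (g y) in HM. rewrite H in HM. lra. }
  unfold g in Hgx. assert (0 < Y x) by auto.
  apply (Rmult_eq_compat_r (Y x)) in Hgx. unfold Rdiv in Hgx.
  rewrite Rmult_assoc, Rinv_l in Hgx by lra. lra.
Qed.

Definition Tk (k x : R) := sqrt (x ^ 2 + k) / 2.
Definition dTk (k x : R) := x / (2 * sqrt (x ^ 2 + k)).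
Definition Gk (k x : R) := (x * sqrt (x ^ 2 + k) + k * ln (x + sqrt (x ^ 2 + k))) / 4.

Lemma S_facts k x : 0 < k -> 0 < sqrt (x ^ 2 + k) /\ sqrt (x ^ 2 + k) * sqrt (x ^ 2 + k) = x ^ 2 + k.
Proof.
  intros Hk. assert (0 < x ^ 2 + k) by (assert (0 <= x ^ 2) by (apply pow2_ge_0); lra).
  split. apply sqrt_lt_R0; auto. apply sqrt_sqrt; lra.
Qed.

Lemma S_gt k x : 0 < k -> 0 <= x -> x < sqrt (x ^ 2 + k).
Proof. intros Hk Hx. destruct (S_facts k x Hk) as [h1 h2]. nra. Qed.

Lemma S_ub k x : 0 < k -> 0 < x -> x * sqrt (x ^ 2 + k) <= x ^ 2 + k.
Proof. intros Hk Hx. destruct (S_facts k x Hk) as [h1 h2]. nra. Qed.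

Lemma Tk_der k x : 0 < k -> is_derive (Tk k) x (dTk k x).
Proof.
  intros Hk. destruct (S_facts k x Hk) as [h1 h2]. unfold Tk, dTk. auto_derive.
  - nra.
  - replace (x * (x * 1)) with (x ^ 2) by ring. field. lra.
Qed.

Lemma Gk_der k x : 0 < k -> is_derive (Gk k) x (Tk k x).
Proof.
  intros Hk. destruct (S_facts k x Hk) as [h1 h2].
  assert (0 < x + sqrt (x ^ 2 + k)) by nra.
  unfold Gk, Tk. auto_derive; replace (x * (x * 1)) with (x ^ 2) by ring.
  - repeat split; nra.
  - set (S := sqrt (x ^ 2 + k)) in *. clearbody S.
    assert (Hk' : k = S * S - x ^ 2) by lra. rewrite Hk'. field. lra.
Qed.

Lemma Tk_sign k n x : 0 < k -> 0 <= x ->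
  Tk k x ^ 2 - qf n x - dTk k x = k / 4 - n - x / (2 * sqrt (x ^ 2 + k)) /\
  0 <= x / (2 * sqrt (x ^ 2 + k)) < 1 / 2.
Proof.
  intros Hk Hx. destruct (S_facts k x Hk) as [h1 h2]. assert (x < sqrt (x^2+k)) by (apply S_gt; auto).
  split.
  - unfold Tk, dTk, qf. set (S := sqrt (x ^ 2 + k)) in *. clearbody S.
    replace ((S / 2) ^ 2) with (S * S / 4) by (field). rewrite h2. field. lra.
  - split. apply Rmult_le_pos; [lra| left; apply Rinv_0_lt_compat; lra].
    apply (Rmult_lt_reg_r (2 * sqrt (x ^ 2 + k))); [lra|].
    unfold Rdiv. rewrite Rmult_assoc, Rinv_l by lra. lra.
Qed.

Lemma r_upper (U dU : R -> R) n :
  (forall x, is_derive U x (dU x)) -> (forall x, is_derive dU x (qf n x * U x)) ->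
  -1/2 < n -> (forall x, 0 <= x -> 0 < U x) ->
  forall x, 0 <= x -> - dU x - Tk (4 * n + 2) x * U x < 0.
Proof.
  intros HU HdU Hn Hpos x Hx.
  assert (Hk : 0 < 4 * n + 2) by lra.
  apply (riccB U dU (qf n) (Tk (4*n+2)) (dTk (4*n+2)) (Gk (4*n+2)) x); auto.
  - intro y. apply Tk_der; auto.
  - intro y. apply Gk_der; auto.
  - intros y Hy. apply Hpos. lra.
  - intros y Hy. unfold Tk. assert (0 <= sqrt (y^2 + (4*n+2))) by apply sqrt_pos. lra.
  - intros y Hy. destruct (Tk_sign (4*n+2) n y Hk) as [e [h1 h2]]; [lra|]. rewrite e. lra.
Qed.

Lemma r_lower (U dU : R -> R) n :
  (forall x, is_derive U x (dU x)) -> (forall x, is_derive dU x (qf n x * U x)) ->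
  1/2 < n -> (forall x, 0 <= x -> 0 < U x) -> small_at_infty U ->
  forall x, 0 <= x -> 0 < - dU x - Tk (4 * n - 2) x * U x.
Proof.
  intros HU HdU Hn Hpos Hs x Hx.
  set (k := 4 * n - 2).
  assert (Hk : 0 < k) by (unfold k; lra).
  apply (riccA U dU (qf n) (Tk k) (dTk k) (Gk k) x); auto.
  - intro y. apply Tk_der; auto.
  - intro y. apply Gk_der; auto.
  - intros y Hy. apply Hpos. lra.
  - intros y Hy. unfold Tk. assert (0 <= sqrt (y^2 + k)) by apply sqrt_pos. lra.
  - intros y Hy. destruct (Tk_sign k n y Hk) as [e [h1 h2]]; [lra|]. rewrite e. assert (k / 4 - n = -1/2) by (unfold k; field). lra.
  - intros eps He. destruct (Hs eps He) as [M HM]. exists (Rmax M (1 + k)). intros y Hy.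
    assert (M < y) by (eapply Rle_lt_trans; [apply Rmax_l| exact Hy]).
    assert (1 + k < y) by (eapply Rle_lt_trans; [apply Rmax_r| exact Hy]).
    destruct (HM y) as [h1 [h2 h3]]; auto. split; auto.
    assert (Tk k y <= y).
    { unfold Tk. assert (y * sqrt (y ^ 2 + k) <= y ^ 2 + k) by (apply S_ub; lra).
      assert (0 <= sqrt (y^2 + k)) by apply sqrt_pos. nra. }
    nra.
Qed.

Lemma eps_lim (f : R -> R) (l : R) :
  (forall eps, 0 < eps -> exists M, forall x, M < x -> Rabs (f x - l) < eps) -> is_lim f p_infty l.
Proof.
  intros H. apply is_lim_spec. intros eps. destruct (H eps (cond_pos eps)) as [M HM]. exists M. exact HM.
Qed.

Lemma ratio_lim (Q P RR : R -> R) :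
  is_lim Q p_infty 1 -> is_lim P p_infty 1 -> is_lim RR p_infty 1 ->
  forall eps, 0 < eps -> exists M, forall x, M < x -> Rabs (Q x / (P x * RR x) - 1) < eps.
Proof.
  intros HQ HP HR.
  assert (HPR := is_lim_mult P RR p_infty 1 1 HP HR I).
  assert (H := is_lim_div Q (fun y => P y * RR y) p_infty 1 _ HQ HPR).
  simpl in H. 
  assert (H' : is_lim (fun y => Q y / (P y * RR y)) p_infty (1 / (1 * 1))).
  { apply H. intro e. injection e. lra. simpl. exact I. }
  intros eps He. destruct (lim_eps _ _ H' eps He) as [M HM]. exists M. intros x Hx.
  specialize (HM x Hx). replace (1 / (1 * 1)) with 1 in HM by field. exact HM.
Qed.

Lemma ladder (U : R -> R -> R) (n : R) (dU : R -> R) :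
  (forall a, is_pcfU a (U a)) -> -1/2 < n ->
  (forall x, is_derive (U n) x (dU x)) -> (forall x, is_derive dU x (qf n x * U n x)) ->
  forall x, 0 <= x -> U (n - 1) x = x / 2 * U n x - dU x /\ 0 < U n x /\
     0 < - dU x - x / 2 * U n x /\ - dU x - Tk (4 * n + 2) x * U n x < 0.
Proof.
  intros HUall Hn HU HdU.
  destruct (HUall n) as [_ HlimP].
  destruct (HUall (n - 1)) as [[dZ HZ] HlimQ].
  assert (Hs := asym_small (U n) n HlimP).
  assert (Hpos := U_pos (U n) dU n HU HdU Hn Hs).
  assert (Hlow : forall x, 0 <= x -> 0 < - dU x - x / 2 * U n x).
  { intros x Hx. apply (riccA_half (U n) dU n x); auto. intros y Hy; apply Hpos; lra. }
  assert (Hup := r_upper (U n) dU n HU HdU Hn Hpos).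
  set (k := 4 * n + 2).
  assert (Hk : 0 < k) by (unfold k; lra).
  set (V := fun x => x / 2 * U n x - dU x).
  set (dV := fun x => U n x / 2 + x / 2 * dU x - qf n x * U n x).
  assert (HV : forall x, is_derive V x (dV x)).
  { intro x. unfold V, dV. auto_derive.
    - repeat split; eexists; eauto.
    - rwd (U n) (dU x) x. rwd dU (qf n x * U n x) x. field. }
  assert (HdV : forall x, is_derive dV x (qf (n - 1) x * V x)).
  { intro x. unfold V, dV, qf. auto_derive.
    - repeat split; eexists; eauto.
    - rwd (U n) (dU x) x. rwd dU (qf n x * U n x) x. unfold qf. field. }
  assert (HVb : forall y, 1 + k < y -> y * U n y < V y /\ V y < (y + k / (2 * y)) * U n y).
  { intros y Hy. assert (0 < U n y) by (apply Hpos; lra).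
    assert (h1 := Hlow y ltac:(lra)). assert (h2 := Hup y ltac:(lra)). fold k in h2.
    assert (y * sqrt (y ^ 2 + k) <= y ^ 2 + k) by (apply S_ub; lra).
    assert (Tk k y <= y / 2 + k / (2 * y)).
    { unfold Tk. apply (Rmult_le_reg_l (2 * y)); [lra|].
      replace (2 * y * (sqrt (y ^ 2 + k) / 2)) with (y * sqrt (y ^ 2 + k)) by field.
      replace (2 * y * (y / 2 + k / (2 * y))) with (y ^ 2 + k) by (field; lra). lra. }
    unfold V. split; [lra|].
    assert (Tk k y * U n y <= (y / 2 + k / (2 * y)) * U n y) by (apply Rmult_le_compat_r; lra).
    lra. }
  intros x Hx. split; [| split; [apply Hpos; auto| split; [apply Hlow; auto| apply Hup; auto]]].
  apply (uniq_sol V dV (U (n - 1)) dZ (qf (n - 1)) x); auto.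
  - intro y. apply (HZ y).
  - intro y. apply (HZ y).
  - intros y Hy. assert (0 < U n y) by (apply Hpos; lra).
    assert (h1 := Hlow y ltac:(lra)). unfold V. assert (0 <= y * U n y) by (apply Rmult_le_pos; lra). lra.
  - intros eps He. destruct (Hs (eps / 2)) as [M HM]; [lra|]. exists (Rmax M (1 + k)). intros y Hy.
    assert (M < y) by (eapply Rle_lt_trans; [apply Rmax_l| exact Hy]).
    assert (1 + k < y) by (eapply Rle_lt_trans; [apply Rmax_r| exact Hy]).
    destruct (HM y) as [h1 [h2 h3]]; auto. destruct (HVb y) as [h4 h5]; auto.
    assert (k / (2 * y) <= 1 / 2).
    { apply (Rmult_le_reg_l (2 * y)); [lra|]. replace (2 * y * (k / (2 * y))) with k by (field; lra). lra. }
    assert ((y + k / (2 * y)) * U n y <= (y + 1/2) * U n y) by (apply Rmult_le_compat_r; lra).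
    nra.
  -
    set (Q := fun y => U (n - 1) y * Rpower y (n - 1 + 1 / 2) * exp (y ^ 2 / 4)).
    set (P := fun y => U n y * Rpower y (n + 1 / 2) * exp (y ^ 2 / 4)).
    set (RR := fun y => V y / (y * U n y)).
    assert (HR : is_lim RR p_infty 1).
    { apply eps_lim. intros eps He. exists (Rmax (1 + k) (k / eps)). intros y Hy.
      assert (1 + k < y) by (eapply Rle_lt_trans; [apply Rmax_l| exact Hy]).
      assert (Hke : k / eps < y) by (eapply Rle_lt_trans; [apply Rmax_r| exact Hy]).
      assert (0 < U n y) by (apply Hpos; lra).
      destruct (HVb y) as [h4 h5]; auto.
      assert (0 < y * U n y) by (apply Rmult_lt_0_compat; lra).
      unfold RR. apply Rabs_def1.
      + assert (V y / (y * U n y) < 1 + k / (2 * y ^ 2)).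
        { apply (Rmult_lt_reg_r (y * U n y)); auto.
          replace (V y / (y * U n y) * (y * U n y)) with (V y) by (field; lra).
          replace ((1 + k / (2 * y ^ 2)) * (y * U n y)) with ((y + k / (2 * y)) * U n y) by (field; lra). lra. }
        assert (k / (2 * y ^ 2) < eps).
        { apply (Rmult_lt_reg_r (2 * y ^ 2)); [nra|].
          replace (k / (2 * y ^ 2) * (2 * y ^ 2)) with k by (field; lra).
          assert (k < eps * y).
          { apply (Rmult_lt_reg_r (/ eps)); [apply Rinv_0_lt_compat; lra|].
            replace (eps * y * / eps) with y by (field; lra). exact Hke. }
          nra. }
        lra.
      + assert (1 < V y / (y * U n y)).
        { apply (Rmult_lt_reg_r (y * U n y)); auto.
          replace (V y / (y * U n y) * (y * U n y)) with (V y) by (field; lra). lra. }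
        lra. }
    intros eps He. destruct (ratio_lim Q P RR HlimQ HlimP HR eps He) as [M HM].
    exists (Rmax M (1 + k)). intros y Hy.
    assert (HMy : M < y) by (eapply Rle_lt_trans; [apply Rmax_l| exact Hy]).
    assert (1 + k < y) by (eapply Rle_lt_trans; [apply Rmax_r| exact Hy]).
    specialize (HM y HMy).
    assert (0 < U n y) by (apply Hpos; lra).
    destruct (HVb y) as [h4 h5]; auto.
    assert (0 < V y) by nra.
    replace (Q y / (P y * RR y)) with (U (n - 1) y / V y) in HM; [exact HM|].
    unfold Q, P, RR.
    replace (n + 1/2) with ((n - 1 + 1/2) + 1) by field.
    rewrite (Rpower_plus (n - 1 + 1/2) 1 y), Rpower_1 by lra.
    assert (0 < Rpower y (n - 1 + 1 / 2)) by apply exp_pos.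
    assert (0 < exp (y ^ 2 / 4)) by apply exp_pos.
    field. repeat split; lra.
  - lra.
Qed.

Ltac fixexp y := repeat match goal with |- context [y * (y * 1)] => replace (y * (y * 1)) with (y ^ 2) by ring end;
  try change (y ^ 2 * / 4) with (y ^ 2 / 4).

Lemma frac_lt a b c d : 0 < b -> 0 < d -> a * d < c * b -> a / b < c / d.
Proof.
  intros Hb Hd H.
  assert (a / b - c / d = (a * d - c * b) / (b * d)) by (field; lra).
  assert ((a * d - c * b) / (b * d) < 0).
  { unfold Rdiv. assert (0 < / (b * d)) by (apply Rinv_0_lt_compat; nra). nra. }
  lra.
Qed.

Lemma gauss_to0 : forall eps, 0 < eps -> exists M, forall y, M < y -> exp (- (y ^ 2 / 4)) < eps.
Proof.
  intros eps He. destruct (gauss_small 0 eps He) as [M HM]. exists M. intros y Hy.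
  specialize (HM y Hy). replace (0 * y - y ^ 2 / 4) with (- (y ^ 2 / 4)) in HM by field. exact HM.
Qed.

Theorem theorem9 :
  forall U : R -> R -> R,
  (forall a : R, is_pcfU a (U a)) ->
  forall n x : R, 0 <= x ->
    (1 / 2 < n ->
       2 / (x + sqrt (4 * n + 2 + x ^ 2)) < U n x / U (n - 1) x /\
       U n x / U (n - 1) x < 2 / (x + sqrt (4 * n - 2 + x ^ 2))) /\
    (-1 / 2 < n < 1 / 2 ->
       2 / (x + sqrt (4 * n + 2 + x ^ 2)) < U n x / U (n - 1) x) /\
    (n = -1 / 2 -> 0 < x ->
       U n x / U (n - 1) x = 2 / (x + sqrt (4 * n + 2 + x ^ 2))).
Proof.
  intros U HUall n x Hx.
  destruct (HUall n) as [[dU HdU0] HlimP].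
  assert (HU : forall y, is_derive (U n) y (dU y)) by (intro y; apply (HdU0 y)).
  assert (HdU : forall y, is_derive dU y (qf n y * U n y)) by (intro y; apply (HdU0 y)).
  assert (Hsp : 0 <= sqrt (4 * n + 2 + x ^ 2)) by apply sqrt_pos.
  assert (Hsp2 : sqrt (4 * n + 2 + x ^ 2) = 2 * Tk (4 * n + 2) x)
    by (unfold Tk; replace (4 * n + 2 + x ^ 2) with (x ^ 2 + (4 * n + 2)) by ring; field).
  assert (Hgen : -1/2 < n -> 0 < U (n - 1) x /\
            2 / (x + sqrt (4 * n + 2 + x ^ 2)) < U n x / U (n - 1) x).
  { intros Hn. destruct (ladder U n dU HUall Hn HU HdU x Hx) as [HL [Hu [Hlo Hhi]]].
    assert (0 < U (n - 1) x).
    { rewrite HL. assert (0 <= x * U n x) by (apply Rmult_le_pos; lra). lra. }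
    split; auto.
    apply frac_lt; [| auto |].
    - assert (0 <= Tk (4*n+2) x) by (unfold Tk; assert (0 <= sqrt (x ^ 2 + (4 * n + 2))) by apply sqrt_pos; lra).
      destruct (Req_dec x 0) as [->|hx0].
      + assert (0 < Tk (4*n+2) 0).
        { unfold Tk. assert (0 < sqrt (0 ^ 2 + (4 * n + 2))) by (apply sqrt_lt_R0; simpl; lra). lra. }
        lra.
      + lra.
    - rewrite HL, Hsp2. lra. }
  split; [| split].
  - intros Hn. destruct (Hgen ltac:(lra)) as [Hv Hlow]. split; auto.
    destruct (ladder U n dU HUall ltac:(lra) HU HdU x Hx) as [HL [Hu [Hlo Hhi]]].
    assert (Hs := asym_small (U n) n HlimP).
    assert (Hpos := U_pos (U n) dU n HU HdU ltac:(lra) Hs).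
    assert (H3 := r_lower (U n) dU n HU HdU Hn Hpos Hs x Hx).
    assert (Hsm : sqrt (4 * n - 2 + x ^ 2) = 2 * Tk (4 * n - 2) x)
      by (unfold Tk; replace (4 * n - 2 + x ^ 2) with (x ^ 2 + (4 * n - 2)) by ring; field).
    assert (0 <= sqrt (4 * n - 2 + x ^ 2)) by apply sqrt_pos.
    apply frac_lt; auto.
    + assert (0 < sqrt (4 * n - 2 + x ^ 2)) by (apply sqrt_lt_R0; assert (0 <= x ^ 2) by apply pow2_ge_0; lra). lra.
    + rewrite HL, Hsm. lra.
  - intros Hn. apply Hgen. lra.
  - intros Hn Hxp.
    destruct (HUall (n - 1)) as [[dZ HZ] HlimQ].
    set (Y1 := fun y => exp (- (y ^ 2 / 4))).
    set (dY1 := fun y => - (y / 2) * exp (- (y ^ 2 / 4))).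
    set (Y2 := fun y => y * exp (- (y ^ 2 / 4))).
    set (dY2 := fun y => (1 - y ^ 2 / 2) * exp (- (y ^ 2 / 4))).
    assert (E1 : U n x = Y1 x).
    { apply (uniq_sol Y1 dY1 (U n) dU (qf n) x); auto; try lra.
      - intro y. unfold Y1, dY1. auto_derive; auto. fixexp y. field.
      - intro y. unfold Y1, dY1, qf. rewrite Hn. auto_derive; auto. fixexp y. field.
      - intros y Hy. apply exp_pos.
      - intros eps He. destruct (gauss_to0 eps He) as [M HM]. exists M. exact HM.
      - intros eps He. destruct (lim_eps _ _ HlimP eps He) as [M HM]. exists (Rmax M 0). intros y Hy.
        assert (M < y) by (eapply Rle_lt_trans; [apply Rmax_l| exact Hy]).
        assert (0 < y) by (eapply Rle_lt_trans; [apply Rmax_r| exact Hy]).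
        specialize (HM y H).
        replace (U n y / Y1 y) with (U n y * Rpower y (n + 1 / 2) * exp (y ^ 2 / 4)); auto.
        replace (n + 1/2) with 0 by lra. rewrite Rpower_O by lra. unfold Y1. rewrite exp_Ropp.
        field. apply Rgt_not_eq, exp_pos. }
    assert (E2 : U (n - 1) x = Y2 x).
    { apply (uniq_sol Y2 dY2 (U (n - 1)) dZ (qf (n - 1)) x); auto; try lra.
      - intro y. unfold Y2, dY2. auto_derive; auto. fixexp y. field.
      - intro y. unfold Y2, dY2, qf. rewrite Hn. auto_derive; auto. fixexp y. field.
      - intro y. apply (HZ y).
      - intro y. apply (HZ y).
      - intros y Hy. unfold Y2. apply Rmult_lt_0_compat; [lra| apply exp_pos].
      - intros eps He. destruct (gauss_small 1 eps He) as [M HM]. exists M. intros y Hy.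
        specialize (HM y Hy). unfold Y2.
        assert (y < exp y) by (assert (H1 := exp_ineq1_le y); lra).
        assert (exp (1 * y - y ^ 2 / 4) = exp y * exp (- (y ^ 2 / 4))).
        { rewrite <- exp_plus. f_equal. field. }
        assert (0 < exp (- (y ^ 2 / 4))) by apply exp_pos.
        nra.
      - intros eps He. destruct (lim_eps _ _ HlimQ eps He) as [M HM]. exists (Rmax M 0). intros y Hy.
        assert (M < y) by (eapply Rle_lt_trans; [apply Rmax_l| exact Hy]).
        assert (0 < y) by (eapply Rle_lt_trans; [apply Rmax_r| exact Hy]).
        specialize (HM y H).
        replace (U (n - 1) y / Y2 y) with (U (n - 1) y * Rpower y (n - 1 + 1 / 2) * exp (y ^ 2 / 4)); auto.
        replace (n - 1 + 1/2) with (Ropp 1) by lra. rewrite Rpower_Ropp, Rpower_1 by lra. unfold Y2. rewrite exp_Ropp.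
        field. split; [apply Rgt_not_eq, exp_pos| lra]. }
    rewrite E1, E2. unfold Y1, Y2.
    replace (4 * n + 2 + x ^ 2) with (x * x) by (rewrite Hn; field).
    rewrite sqrt_square by lra.
    assert (0 < exp (- (x ^ 2 / 4))) by apply exp_pos.
    field. repeat split; lra.
Qed.
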